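(* Let $n\ge1$, $d\ge0$, and let $\mathcal B_{n,d}$ be the set of directed multigraphs with output pair $H=(V,E,(a,b))$, up to isomorphism, with $|V|\le\min\{n,2+2d\}$, $|E|\le d$, and no isolated node in $V\setminus\{a,b\}$. Then $\{Q_H: H\in\mathcal B_{n,d}\}$ is a basis of the space of $S_n$-equivariant polynomial maps $\mathbb R^{n\times n}\to\mathbb R^{n\times n}$ of degree at most $d$. Moreover, for every such $H$, $Q_H(X)=\sum_{g\in S_n} g\cdot M_H(g^{-1}\cdot X)$, where $M_H(X)=\delta^{a,b}\prod_{(r,s)\in E}X_{r,s}$ (here $H$ is viewed as having node set contained in $[n]$ and $\delta^{a,b}\in\mathbb R^{n\times n}$ is the matrix unit with a $1$ in entry $(a,b)$).
   Context: A directed multigraph with output pair is $H=(V,E,(a,b))$ with $V=[m]$, $E$ a finite multiset of ordered pairs $(r,s)\in V\times V$ (parallel edges and self-loops allowed), and $a,b\in V$ a distinguished, not necessarily distinct, pair (the red edge, not an element of $E$). A node is isolated if no edge of $E$ is incident to it. Isomorphism of such multigraphs: a bijection of node sets carrying the edge multiset onto the edge multiset and $(a,b)$ onto the red pair. For $X\in\mathbb R^{n\times n}$, $Q_H(X)_{i_a,i_b}=\sum_{j}\prod_{(r,s)\in E}X_{j_r,j_s}$, where the sum is over all injective maps $j:[m]\to[n]$ with $j_a=i_a$, $j_b=i_b$ (product with multiplicity; empty product $=1$); if $a=b$ the off-diagonal entries of $Q_H(X)$ are $0$. $S_n$ acts by $(g\cdot X)_{ij}=X_{g^{-1}(i),g^{-1}(j)}$,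 and a polynomial map $P$ is equivariant if $P(g\cdot X)=g\cdot P(X)$ for all $g\in S_n$. *)

(* Defs.v *)
From HB Require Import structures.
From mathcomp Require Import all_boot all_order all_fingroup all_algebra.
From mathcomp Require Import reals.
From mathcomp Require mpoly.
Unset Printing Implicit Defensive.
Import Order.TTheory GRing.Theory Num.Theory.
Local Open Scope ring_scope.

(* A directed multigraph with output pair: nodes 'I_m (i.e. [m]),
   edge multiset E given as a list (order irrelevant), red pair (a,b). *)
Record mgraph := MGraph {
  mg_m : nat;
  mg_E : seq ('I_mg_m * 'I_mg_m);
  mg_a : 'I_mg_m;
  mg_b : 'I_mg_m }.

Definition isolated (H : mgraph) (v : 'I_(mg_m H)) : bool :=
  ~~ has (fun e => (e.1 == v) || (e.2 == v)) (mg_E H).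

Definition mg_iso (H H' : mgraph) : Prop :=
  exists f : 'I_(mg_m H) -> 'I_(mg_m H'),
    bijective f /\
    perm_eq [seq (f e.1, f e.2) | e <- mg_E H] (mg_E H') /\
    f (mg_a H) = mg_a H' /\ f (mg_b H) = mg_b H'.

Definition in_B (n d : nat) (H : mgraph) : Prop :=
  (mg_m H <= minn n (2 + 2 * d))%N /\
  (size (mg_E H) <= d)%N /\
  (forall v : 'I_(mg_m H), v != mg_a H -> v != mg_b H -> ~~ isolated H v).

(* A family hs of representatives of B_{n,d}: exactly one per iso class. *)
Definition is_rep (n d k : nat) (hs : 'I_k -> mgraph) : Prop :=
  (forall i, in_B n d (hs i)) /\
  (forall i j, mg_iso (hs i) (hs j) -> i = j) /\
  (forall H, in_B n d H -> exists i, mg_iso H (hs i)).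
Arguments is_rep n d {k} hs.

Definition QH (R : comNzRingType) (n : nat) (H : mgraph) (X : 'M[R]_n) : 'M[R]_n :=
  \matrix_(i, j)
    \sum_(f : {ffun 'I_(mg_m H) -> 'I_n} |
            [&& injectiveb f, f (mg_a H) == i & f (mg_b H) == j])
      \prod_(e <- mg_E H) X (f e.1) (f e.2).
Arguments QH {R n} H X.

Definition Sact (R : Type) (n : nat) (g : 'S_n) (X : 'M[R]_n) : 'M[R]_n :=
  \matrix_(i, j) X ((g^-1)%g i) ((g^-1)%g j).
Arguments Sact {R n} g X.

Definition MH (R : comNzRingType) (n : nat) (H : mgraph) (hm : (mg_m H <= n)%N)
    (X : 'M[R]_n) : 'M[R]_n :=
  (\prod_(e <- mg_E H) X (widen_ord hm e.1) (widen_ord hm e.2))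
    *: delta_mx (widen_ord hm (mg_a H)) (widen_ord hm (mg_b H)).
Arguments MH {R n H} hm X.

Definition poly_map_deg (R : realType) (n d : nat) (P : 'M[R]_n -> 'M[R]_n) : Prop :=
  exists p : 'I_n -> 'I_n -> mpoly.mpoly (n * n) R,
    forall i j, all (fun m => (mpoly.mdeg m <= d)%N) (mpoly.msupp (p i j)) /\
      forall X, P X i j = mpoly.meval (fun k => mxvec X 0 k) (p i j).
Arguments poly_map_deg {R} n d P.

Definition equivariant (R : Type) (n : nat) (P : 'M[R]_n -> 'M[R]_n) : Prop :=
  forall (g : 'S_n) X, P (Sact g X) = Sact g (P X).
Arguments equivariant {R n} P.

Definition EqPoly (R : realType) (n d : nat) (P : 'M[R]_n -> 'M[R]_n) : Prop :=
  poly_map_deg n d P /\ equivariant P.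
Arguments EqPoly {R} n d P.

(* Main.v *)
Require Import Defs.
From HB Require Import structures.
From mathcomp Require Import all_boot all_order all_fingroup all_algebra.
From mathcomp Require Import reals.
From mathcomp Require mpoly.
From mathcomp Require Import mpoly.
From mathcomp Require Import zify.
From Stdlib Require Import Classical.
Import Order.TTheory GRing.Theory Num.Theory.
Set Implicit Arguments. Unset Strict Implicit. Unset Printing Implicit Defensive.
Local Open Scope ring_scope.

Section Fiber.
Variables (n m : nat) (e : 'I_m -> 'I_n).
Hypothesis e_inj : injective e.

Definition gres (g : 'S_n) : {ffun 'I_m -> 'I_n} := [ffun x => g (e x)].

Lemma gres_inj g : injectiveb (gres g).
Proof. by apply/injectiveP => x y; rewrite !ffunE => /perm_inj /e_inj. Qed.

Definition stab := [set h : 'S_n | gres h == gres 1%g].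

Lemma stab_card : #|stab| = (n - m)`!.
Proof.
have -> : stab = [set h in perm_on (~: [set e x | x in 'I_m])].
  apply/setP => h; rewrite !inE; apply/eqP/idP.
  - move=> hE; apply/subsetP => y; rewrite !inE => hy; apply/imsetP => -[x _ yE].
    move: hy; rewrite yE; have := congr1 (fun f : {ffun _ -> _} => f x) hE; rewrite /= !ffunE perm1 => ->.
    by rewrite eqxx.
  - move=> hp; apply/ffunP => x; rewrite !ffunE perm1; apply/eqP; apply: contraT => hx.
    have := subsetP hp (e x); rewrite inE hx => /(_ isT).
    by rewrite !inE imset_f.
rewrite cardsE card_perm cardsCs setCK card_imset // !card_ord.
by [].
Qed.

Lemma fiber_card_le f : (#|[set g : 'S_n | gres g == f]| <= (n - m)`!)%N.
Proof.
case: (set_0Vmem [set g : 'S_n | gres g == f]) => [-> | [g0]]; first by rewrite cards0.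
rewrite inE => /eqP g0E.
have -> : [set g : 'S_n | gres g == f] = (stab :* g0)%g.
  apply/setP => g; rewrite mem_rcoset !inE; apply/eqP/eqP => hg; apply/ffunP => x;
    have := congr1 (fun f : {ffun _ -> _} => f x) hg; rewrite /= -?g0E !ffunE ?perm1 ?permM.
  - by move=> ->; rewrite permK.
  - by move=> E; rewrite -[g (e x)](permKV g0) E.
by rewrite card_rcoset stab_card.
Qed.

Lemma mn : (m <= n)%N.
Proof. by have := leq_card e e_inj; rewrite !card_ord. Qed.

Lemma fiber_sum : (\sum_(f : {ffun 'I_m -> 'I_n} | injectiveb f) #|[set g : 'S_n | gres g == f]|)%N = n`!.
Proof.
rewrite -[RHS](card_Sn n) -sum1_card; symmetry.
rewrite (partition_big gres (fun f : {ffun 'I_m -> 'I_n} => injectiveb f)) /=; last by move=> g _; exact: gres_inj.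
apply: eq_bigr => f _; rewrite -sum1_card; apply: eq_bigl => g; by rewrite !inE.
Qed.

Lemma fiber_card (f : {ffun 'I_m -> 'I_n}) : injectiveb f -> #|[set g : 'S_n | gres g == f]| = (n - m)`!.
Proof.
move=> finj; apply/eqP; rewrite eqn_leq fiber_card_le /=; apply: contraT; rewrite -ltnNge => lt.
have : (\sum_(f : {ffun 'I_m -> 'I_n} | injectiveb f) #|[set g : 'S_n | gres g == f]| <
        \sum_(f : {ffun 'I_m -> 'I_n} | injectiveb f) (n - m)`!)%N.
  rewrite (bigD1 f) //= [X in (_ < X)%N](bigD1 f) //=.
  by rewrite -addSn leq_add // leq_sum // => h _; exact: fiber_card_le.
rewrite fiber_sum sum_nat_const.
have -> : #|[pred f : {ffun 'I_m -> 'I_n} | injectiveb f]| = n ^_ m.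
  have := card_inj_ffuns 'I_m 'I_n; rewrite !card_ord => <-.
  by apply: eq_card => h; rewrite !inE.
by rewrite ffact_fact ?mn // ltnn.
Qed.

Lemma sum_perm_restrict (R : comNzRingType) (F : {ffun 'I_m -> 'I_n} -> R) :
  \sum_(g : 'S_n) F (gres g) = (n - m)`!%:R * \sum_(f : {ffun 'I_m -> 'I_n} | injectiveb f) F f.
Proof.
rewrite (partition_big gres (fun f : {ffun 'I_m -> 'I_n} => injectiveb f)) /=; last by move=> g _; exact: gres_inj.
rewrite mulr_sumr; apply: eq_bigr => f finj.
rewrite (eq_bigr (fun _ => F f)); last by move=> g /eqP ->.
by rewrite sumr_const -(fiber_card finj) mulr_natl; congr (_ *+ _); apply: eq_card => g; rewrite inE.
Qed.

End Fiber.

Lemma widen_inj m n (h : (m <= n)%N) : injective (widen_ord h).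
Proof. by move=> x y /(congr1 val) => /= xy; apply: val_inj. Qed.

Lemma QH_sym (R : comNzRingType) (n : nat) (H : mgraph) (hm : (mg_m H <= n)%N) (X : 'M[R]_n) :
  (n - mg_m H)`!%:R *: QH H X = \sum_(g : 'S_n) Sact g (MH hm (Sact (g^-1)%g X)).
Proof.
apply/matrixP => i j; rewrite summxE !mxE.
pose F (f : {ffun 'I_(mg_m H) -> 'I_n}) :=
  ((f (mg_a H) == i) && (f (mg_b H) == j))%:R * \prod_(e <- mg_E H) X (f e.1) (f e.2).
transitivity (\sum_(g : 'S_n) F (gres (widen_ord hm) g)); last first.
  apply: eq_bigr => g _; rewrite /F !mxE !ffunE mulrC; congr (_ * _).
    by apply: eq_bigr => e _; rewrite !mxE !ffunE invgK.
  have E (k y : 'I_n) : (g^-1%g k == y) = (g y == k).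
    by apply/eqP/eqP => <-; rewrite ?permKV ?permK.
  by rewrite !E.
rewrite sum_perm_restrict; last exact: widen_inj.
congr (_ * _); rewrite [RHS]big_mkcond [LHS]big_mkcond; apply: eq_bigr => f _ /=.
rewrite /F; case: (injectiveb f); case: (f (mg_a H) == i); case: (f (mg_b H) == j);
  by rewrite /= ?mul1r ?mul0r.
Qed.

Lemma iso_refl H : mg_iso H H.
Proof.
exists id; split; first exact: (Bijective (g:=id)).
split=> //; rewrite (@eq_map _ _ _ id) ?map_id //; by case.
Qed.

Lemma iso_sym H H' : mg_iso H H' -> mg_iso H' H.
Proof.
case=> f [[g fK gK] [pe [ea eb]]].
exists g; split; first exact: (Bijective gK fK).
split; last by rewrite -ea -eb !fK.
rewrite perm_sym; have := perm_map (fun e => (g e.1, g e.2)) pe.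
by rewrite -map_comp (@eq_map _ _ _ id) ?map_id // => -[x y] /=; rewrite !fK.
Qed.

Lemma iso_trans H1 H2 H3 : mg_iso H1 H2 -> mg_iso H2 H3 -> mg_iso H1 H3.
Proof.
case=> f1 [b1 [p1 [a1 c1]]] [f2 [b2 [p2 [a2 c2]]]].
exists (f2 \o f1); split; first exact: bij_comp.
split; last by rewrite /= a1 c1.
apply: perm_trans p2; have := perm_map (fun e => (f2 e.1, f2 e.2)) p1.
by rewrite -map_comp.
Qed.

Lemma QH_iso (R : comNzRingType) (n : nat) H H' (X : 'M[R]_n) :
  mg_iso H H' -> QH H X = QH H' X.
Proof.
case=> f [[g fK gK] [pe [ea eb]]]; apply/matrixP => i j; rewrite !mxE.
pose h (f' : {ffun 'I_(mg_m H') -> 'I_n}) : {ffun 'I_(mg_m H) -> 'I_n} := [ffun x => f' (f x)].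
have hb : bijective h.
  exists (fun f0 : {ffun 'I_(mg_m H) -> 'I_n} => [ffun y => f0 (g y)]) => f0;
    by apply/ffunP => x; rewrite !ffunE ?fK ?gK.
rewrite (reindex h (onW_bij _ hb)); apply: eq_big => f' /=.
  rewrite !ffunE ea eb; congr (_ && _); apply/injectiveP/injectiveP => Hinj x y.
    move=> E; rewrite -(gK x) -(gK y); have -> // : g x = g y.
    by apply: Hinj; rewrite !ffunE !gK.
  by rewrite !ffunE => /Hinj /(congr1 g); rewrite !fK.
move=> _; rewrite -(perm_big _ pe) big_map; apply: eq_bigr => e _; by rewrite !ffunE.
Qed.

Lemma sum_cond (R : comNzRingType) (T : finType) m (a b : 'I_m) (i j : T)
   (P : {ffun 'I_m -> T} -> R) :
  \sum_(f : {ffun 'I_m -> T} | [&& injectiveb f, f a == i & f b == j]) P f =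
  \sum_(f : {ffun 'I_m -> T} | injectiveb f) ((f a == i) && (f b == j))%:R * P f.
Proof.
rewrite [RHS]big_mkcond [LHS]big_mkcond; apply: eq_bigr => f _ /=.
by case: (injectiveb f); case: (f a == i); case: (f b == j); rewrite /= ?mul1r ?mul0r.
Qed.

Section Compress.
Variables (n : nat) (L : seq ('I_n * 'I_n)) (u v : 'I_n).

Definition nodesL := [:: u, v & flatten [seq [:: e.1; e.2] | e <- L]].
Definition nodesS : {set 'I_n} := [set x in nodesL].
Lemma uS : u \in nodesS. Proof. by rewrite inE mem_head. Qed.
Definition er := enum_rank_in uS.
Definition Gc := MGraph #|nodesS| (map (fun e => (er e.1, er e.2)) L) (er u) (er v).
Definition Gfull := MGraph n L u v.

Lemma inS1 e : e \in L -> e.1 \in nodesS.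
Proof.
move=> eL; rewrite inE !in_cons; apply/orP; right; apply/orP; right.
by apply/flatten_mapP; exists e => //; rewrite mem_head.
Qed.
Lemma inS2 e : e \in L -> e.2 \in nodesS.
Proof.
move=> eL; rewrite inE !in_cons; apply/orP; right; apply/orP; right.
by apply/flatten_mapP; exists e => //; rewrite !inE eqxx orbT.
Qed.
Lemma vS : v \in nodesS. Proof. by rewrite inE !in_cons eqxx orbT. Qed.

Lemma QH_compress (R : comNzRingType) (X : 'M[R]_n) :
  QH Gfull X = (n - #|nodesS|)`!%:R *: QH Gc X.
Proof.
apply/matrixP => i j; rewrite !mxE /= !sum_cond.
pose F (f : {ffun 'I_n -> 'I_n}) :=
  ((f u == i) && (f v == j))%:R * \prod_(e <- L) X (f e.1) (f e.2).
have := @sum_perm_restrict n n id (fun x y (h : x = y) => h) R F.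
rewrite subnn fact0 mul1r => <-.
pose G (f : {ffun 'I_#|nodesS| -> 'I_n}) :=
  ((f (er u) == i) && (f (er v) == j))%:R *
  \prod_(e <- map (fun e => (er e.1, er e.2)) L) X (f e.1) (f e.2).
rewrite -(@sum_perm_restrict n #|nodesS| enum_val (@enum_val_inj _ _) R G).
apply: eq_bigr => g _; rewrite /F /G !ffunE /= !enum_rankK_in ?uS ?vS //.
congr (_ * _); rewrite big_map; apply: eq_big_seq => e eL.
by rewrite !ffunE !enum_rankK_in ?inS1 ?inS2.
Qed.

Lemma size_nodesL : size nodesL = (2 + 2 * size L)%N.
Proof.
rewrite /nodesL /=; congr (_.+2); elim: L => //= e s ->; lia.
Qed.

Lemma Gc_inB d : (size L <= d)%N -> in_B n d Gc.
Proof.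
move=> sL; split; [|split].
- rewrite /= leq_min; apply/andP; split.
    by have := max_card (mem nodesS); rewrite card_ord.
  rewrite cardsE; apply: leq_trans (card_size _) _; rewrite size_nodesL; lia.
- by rewrite /= size_map.
- move=> w /= wu wv; rewrite /isolated negbK /=.
  have := enum_valP w; rewrite inE !in_cons => /orP[/eqP xu|/orP[/eqP xv|]].
  + by move: wu; rewrite -xu /er enum_valK_in eqxx.
  + by move: wv; rewrite -xv /er enum_valK_in eqxx.
  case/flatten_mapP => e eL; rewrite !inE => /orP[/eqP x1|/eqP x2];
    apply/hasP; exists (er e.1, er e.2); rewrite ?(map_f (fun e => (er e.1, er e.2)) eL) //=.
  + by rewrite -x1 /er enum_valK_in eqxx.
  + by rewrite -x2 /er enum_valK_in eqxx orbT.
Qed.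

End Compress.

Lemma Sact_sum (V : nmodType) n (g : 'S_n) (I : Type) (r : seq I) (P : pred I)
   (F : I -> 'M[V]_n) :
  Sact g (\sum_(t <- r | P t) F t) = \sum_(t <- r | P t) Sact g (F t).
Proof. by apply/matrixP => i j; rewrite !mxE !summxE; apply: eq_bigr => t _; rewrite mxE. Qed.

Lemma SactZ (R : comNzRingType) n (g : 'S_n) (a : R) (A : 'M[R]_n) :
  Sact g (a *: A) = a *: Sact g A.
Proof. by apply/matrixP => i j; rewrite !mxE. Qed.

Lemma SactK (T : Type) n (g : 'S_n) (A : 'M[T]_n) : Sact g (Sact (g^-1)%g A) = A.
Proof. by apply/matrixP => i j; rewrite !mxE invgK !permKV. Qed.

Definition unidx n (t : 'I_(n * n)) : 'I_n * 'I_n := enum_val (cast_ord (esym (@mxvec_cast n n)) t).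

Lemma unidxK n (t : 'I_(n * n)) : mxvec_index (unidx t).1 (unidx t).2 = t.
Proof. by case/mxvec_indexP: t => i j; rewrite /unidx /mxvec_index cast_ordK enum_rankK. Qed.

Lemma unidx_idx n (i j : 'I_n) : unidx (mxvec_index i j) = (i, j).
Proof. by rewrite /unidx /mxvec_index cast_ordK enum_rankK. Qed.

Definition Lmu n (mu : 'X_{1..n * n}) : seq ('I_n * 'I_n) :=
  flatten [seq nseq (mu t) (unidx t) | t <- enum 'I_(n * n)].

Lemma size_Lmu n (mu : 'X_{1..n * n}) : size (Lmu mu) = mdeg mu.
Proof.
rewrite /Lmu size_flatten /shape -map_comp sumnE big_map mdegE big_enum /=.
by apply: eq_bigr => t _; rewrite size_nseq.
Qed.

Lemma prod_Lmu (R : comNzRingType) n (mu : 'X_{1..n * n}) (Y : 'M[R]_n) :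
  \prod_(e <- Lmu mu) Y e.1 e.2 = \prod_(t < n * n) (mxvec Y 0 t) ^+ mu t.
Proof.
rewrite /Lmu big_flatten big_map big_enum /=; apply: eq_bigr => t _.
rewrite big_nseq iter_mulr mulr1; congr (_ ^+ _).
by rewrite -[X in _ = mxvec Y 0 X](unidxK t) mxvecE.
Qed.

Section Span.
Variables (R : realType) (n d k : nat) (hs : 'I_k -> mgraph).
Hypothesis hrep : is_rep n d hs.

Definition InSpan (F : 'M[R]_n -> 'M[R]_n) :=
  exists c : 'I_k -> R, forall X, F X = \sum_l c l *: QH (hs l) X.

Lemma span_ext F G : InSpan F -> (forall X, G X = F X) -> InSpan G.
Proof. by case=> c hc hG; exists c => X; rewrite hG hc. Qed.

Lemma span0 : InSpan (fun _ => 0).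
Proof. by exists (fun _ => 0) => X; rewrite big1 // => l _; rewrite scale0r. Qed.

Lemma spanD F G : InSpan F -> InSpan G -> InSpan (fun X => F X + G X).
Proof.
case=> c hc [c' hc']; exists (fun l => c l + c' l) => X.
by rewrite hc hc' -big_split; apply: eq_bigr => l _; rewrite scalerDl.
Qed.

Lemma spanZ a F : InSpan F -> InSpan (fun X => a *: F X).
Proof.
case=> c hc; exists (fun l => a * c l) => X.
by rewrite hc scaler_sumr; apply: eq_bigr => l _; rewrite scalerA.
Qed.

Lemma span_sum (T : eqType) (r : seq T) (P : pred T) (F : T -> 'M[R]_n -> 'M[R]_n) :
  (forall t, t \in r -> InSpan (F t)) -> InSpan (fun X => \sum_(t <- r | P t) F t X).
Proof.
elim: r => [|t r IH] h.
  by apply: span_ext span0 _ => X; rewrite big_nil.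
have IH' := IH (fun s sr => h s (@mem_behead _ (t :: r) s sr)).
case: (boolP (P t)) => Pt.
  apply: span_ext (spanD (h t (mem_head _ _)) IH') _ => X; by rewrite big_cons Pt.
by apply: span_ext IH' _ => X; rewrite big_cons (negbTE Pt).
Qed.

Lemma span_graph (L : seq ('I_n * 'I_n)) u v :
  (size L <= d)%N -> InSpan (fun X => QH (MGraph n L u v) X).
Proof.
move=> sL; case: hrep => _ [_ hcov].
have [l hl] := hcov _ (Gc_inB u v sL).
exists (fun l' => if l' == l then (n - #|nodesS L u v|)`!%:R else 0) => X.
rewrite (bigD1 l) //= eqxx big1 ?addr0; last by move=> l' /negbTE ->; rewrite scale0r.
by rewrite -(QH_iso X hl) -QH_compress.
Qed.

Lemma span_poly P : EqPoly n d P -> InSpan P.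
Proof.
case=> [[p hp] heq].
pose T X := \sum_(g : 'S_n) Sact g (P (Sact (g^-1)%g X)).
have hT X : T X = n`!%:R *: P X.
  rewrite /T (eq_bigr (fun _ => P X)); last by move=> g _; rewrite heq SactK.
  by rewrite sumr_const card_Sn scaler_nat.
have hexp Y : P Y = \sum_u \sum_v \sum_(mu <- msupp (p u v))
     (p u v)@_mu *: MH (leqnn n : (mg_m (MGraph n (Lmu mu) u v) <= n)%N) Y.
  rewrite {1}(matrix_sum_delta (P Y)); apply: eq_bigr => u _; apply: eq_bigr => v _.
  rewrite (proj2 (hp u v)) mevalE scaler_suml.
  apply: (@eq_bigr _ _ _ _ _ _ (fun mu => ((p u v)@_mu * \prod_i0 mxvec Y 0 i0 ^+ mu i0) *: delta_mx u v)) => mu _.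
  rewrite /MH -scalerA -prod_Lmu /=.
  have wid (x : 'I_n) : widen_ord (leqnn n) x = x by apply: val_inj.
  by rewrite !wid; congr (_ *: (_ *: _)); apply: eq_bigr => e _; rewrite !wid.
have hT2 X : T X = \sum_u \sum_v \sum_(mu <- msupp (p u v))
     (p u v)@_mu *: QH (MGraph n (Lmu mu) u v) X.
  rewrite /T (eq_bigr (fun g => \sum_u \sum_v \sum_(mu <- msupp (p u v))
     (p u v)@_mu *: Sact g (MH (leqnn n : (mg_m (MGraph n (Lmu mu) u v) <= n)%N)
                              (Sact (g^-1)%g X)))); last first.
    move=> g _; rewrite hexp Sact_sum; apply: eq_bigr => u _; rewrite Sact_sum.
    apply: eq_bigr => v _; rewrite Sact_sum; apply: eq_bigr => mu _; by rewrite SactZ.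
  rewrite exchange_big; apply: eq_bigr => u _; rewrite exchange_big; apply: eq_bigr => v _.
  rewrite exchange_big; apply: eq_bigr => mu _; rewrite -scaler_sumr -QH_sym /=.
  by rewrite subnn fact0 scale1r.
have sT : InSpan T.
  apply: (span_ext _ hT2); apply: span_sum => u _.
  apply: span_sum => v _; apply: span_sum => mu hmu; apply: spanZ; apply: span_graph.
  by rewrite size_Lmu; move/allP: (proj1 (hp u v)) => /(_ mu hmu).
apply: span_ext (spanZ (n`!%:R)^-1 sT) _ => X.
by rewrite hT scalerA mulVf ?scale1r // pnatr_eq0 -lt0n fact_gt0.
Qed.

End Span.

Lemma digits_bound (B N : nat) (a : nat -> nat) :
  (forall t, (t < N)%N -> (a t < B)%N) -> (\sum_(t < N) a t * B ^ t < B ^ N)%N.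
Proof.
elim: N => [|N IH] h; first by rewrite big_ord0 expn0.
rewrite big_ord_recr /= expnSr.
have h1 := IH (fun t tN => h t (ltnW tN)); have h2 := h N (ltnSn N).
move: h1 h2; set S := (\sum_(i < N) _)%N; set P := (B ^ N)%N; set x := a N; nia.
Qed.

Lemma digits_uniq (B N : nat) (a b : nat -> nat) :
  (forall t, (t < N)%N -> (a t < B)%N) -> (forall t, (t < N)%N -> (b t < B)%N) ->
  (\sum_(t < N) a t * B ^ t)%N = (\sum_(t < N) b t * B ^ t)%N ->
  forall t, (t < N)%N -> a t = b t.
Proof.
elim: N => [|N IH] ha hb; first by [].
rewrite !big_ord_recr /=.
have ha1 := digits_bound (fun t tN => ha t (ltnW tN)).
have hb1 := digits_bound (fun t tN => hb t (ltnW tN)).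
move: ha1 hb1; set Sa := (\sum_(i < N) a i * _)%N; set Sb := (\sum_(i < N) b i * _)%N.
set P := (B ^ N)%N => ha1 hb1 E.
have eN : a N = b N.
  move: E ha1 hb1; set x := a N; set y := b N; nia.
have eS : Sa = Sb by move: E; rewrite eN; lia.
move=> t; rewrite ltnS leq_eqVlt => /orP[/eqP -> //|tN].
exact: (IH (fun t tN => ha t (ltnW tN)) (fun t tN => hb t (ltnW tN)) eS).
Qed.

Lemma poly_eval_eq0 (R : numDomainType) (q : {poly R}) : (forall t, q.[t] = 0) -> q = 0.
Proof.
move=> h; apply/eqP; apply: contraT => q0.
have := max_poly_roots q0 (rs := [seq i%:R | i <- iota 0 (size q)]).
rewrite size_map size_iota ltnn; apply.
  by apply/allP => x /mapP [i _ ->]; rewrite /root h.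
by rewrite map_inj_uniq ?iota_uniq // => i j /eqP; rewrite eqr_nat => /eqP.
Qed.

Lemma meval_eq0 (R : numDomainType) N (p : {mpoly R[N]}) :
  (forall v, meval v p = 0) -> p = 0.
Proof.
move=> h; set B := msize p.
pose ext (mu : 'X_{1..N}) (t : nat) : nat := odflt 0%N (omap mu (insub t)).
have extE mu (i : 'I_N) : ext mu i = mu i by rewrite /ext valK.
pose enc (mu : 'X_{1..N}) := (\sum_(t < N) ext mu t * B ^ t)%N.
have dig mu : mu \in msupp p -> forall t, (t < N)%N -> (ext mu t < B)%N.
  move=> hmu t tN; have := msize_mdeg_lt hmu; rewrite -/B; apply: leq_trans.
  rewrite /ext insubT /= mdegE ltnS (bigD1 (Ordinal tN)) //=; exact: leq_addr.
have enc_inj mu nu : mu \in msupp p -> nu \in msupp p -> enc mu = enc nu -> mu = nu.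
  move=> hmu hnu E; apply/mnmP => i; rewrite -!extE.
  exact: (digits_uniq (dig _ hmu) (dig _ hnu) E).
pose Q : {poly R} := \sum_(mu <- msupp p) p@_mu *: 'X^(enc mu).
have Q0 : Q = 0.
  apply: poly_eval_eq0 => t; rewrite -(h (fun i => t ^+ (B ^ i))) mevalE horner_sum.
  apply: eq_bigr => mu _; rewrite hornerZ hornerXn; congr (_ * _).
  rewrite /enc -prodrXr; apply: eq_bigr => i _; by rewrite extE mulnC exprM.
apply: msuppnil0; case E: (msupp p) => [|mu0 s] //.
have hmu0 : mu0 \in msupp p by rewrite E mem_head.
have := congr1 (fun q : {poly R} => q`_(enc mu0)) Q0.
rewrite coef0 coef_sum (bigD1_seq mu0) ?msupp_uniq //= coefZ coefXn eqxx mulr1.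
rewrite big_seq_cond big1 ?addr0 => [E0|]; first by move: hmu0; rewrite mcoeff_msupp -E0 eqxx.
move=> mu /andP[hmu neq]; rewrite coefZ coefXn; case: eqP => [/esym/enc_inj|]; last by rewrite mulr0.
by move=> /(_ hmu hmu0) eq; rewrite eq eqxx in neq.
Qed.

Definition monL n m (L : seq ('I_m * 'I_m)) (f : {ffun 'I_m -> 'I_n}) : 'X_{1..n * n} :=
  (\sum_(e <- L) U_(mxvec_index (f e.1) (f e.2)))%MM.

Definition pQ (R : realType) n (H : mgraph) (i j : 'I_n) : {mpoly R[n * n]} :=
  \sum_(f : {ffun 'I_(mg_m H) -> 'I_n} | [&& injectiveb f, f (mg_a H) == i & f (mg_b H) == j])
    'X_[monL (mg_E H) f].

Lemma meval_monL (R : realType) n m (v : 'I_(n * n) -> R) (L : seq ('I_m * 'I_m)) f :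
  meval v 'X_[monL L f] = \prod_(e <- L) v (mxvec_index (f e.1) (f e.2)).
Proof.
rewrite /monL; elim: L => [|e L IH]; first by rewrite !big_nil mpolyX0 meval1.
by rewrite !big_cons mpolyXD mevalM mevalXU IH.
Qed.

Lemma QH_meval (R : realType) n H (X : 'M[R]_n) i j :
  QH H X i j = meval (fun k => mxvec X 0 k) (pQ R H i j).
Proof.
rewrite mxE /pQ (big_morph _ (mevalD _) (meval0 _)); apply: eq_bigr => f _.
by rewrite meval_monL; apply: eq_bigr => e _; rewrite mxvecE.
Qed.

Lemma mdeg_monL n m (L : seq ('I_m * 'I_m)) (f : {ffun 'I_m -> 'I_n}) :
  mdeg (monL L f) = size L.
Proof. by rewrite /monL mdeg_sum (eq_bigr (fun _ => 1%N)) ?sum1_size // => e _; rewrite mdeg1. Qed.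

Lemma pQ_deg (R : realType) n H (i j : 'I_n) :
  all (fun m => (mdeg m <= size (mg_E H))%N) (msupp (pQ R H i j)).
Proof.
apply/allP => m /msupp_sum_le /flatten_mapP [f _]; rewrite msuppX inE => /eqP ->.
by rewrite mdeg_monL.
Qed.

Lemma QH_equiv (R : comNzRingType) n H : equivariant (@QH R n H).
Proof.
move=> g X; apply/matrixP => i j; rewrite !mxE.
pose h (f : {ffun 'I_(mg_m H) -> 'I_n}) : {ffun 'I_(mg_m H) -> 'I_n} := [ffun x => (g^-1)%g (f x)].
have hb : bijective h.
  exists (fun f0 : {ffun 'I_(mg_m H) -> 'I_n} => [ffun y => g (f0 y)]) => f0;
    by apply/ffunP => x; rewrite !ffunE ?permK ?permKV.
rewrite [RHS](reindex h (onW_bij _ hb)); apply: eq_big => f /=.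
  rewrite !ffunE !(inj_eq perm_inj); congr (_ && _).
  apply/injectiveP/injectiveP => Hinj x y.
    by rewrite /h !ffunE => /perm_inj /Hinj.
  by move=> E; apply: Hinj; rewrite /h !ffunE E.
by move=> _; apply: eq_bigr => e _; rewrite /h !mxE !ffunE.
Qed.

Lemma QH_EqPoly (R : realType) n d H : in_B n d H -> EqPoly n d (@QH R n H).
Proof.
case=> _ [sE _]; split; last exact: QH_equiv.
exists (pQ R H) => i j; split; last by move=> X; rewrite QH_meval.
apply/allP => m hm; have := allP (pQ_deg R H i j) m hm; move=> /leq_trans; exact.
Qed.

Lemma monL_count n m (L : seq ('I_m * 'I_m)) (f : {ffun 'I_m -> 'I_n}) k :
  monL L f k = count (fun e => mxvec_index (f e.1) (f e.2) == k) L.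
Proof.
rewrite /monL mnm_sumE; elim: L => [|e L IH]; first by rewrite big_nil.
by rewrite big_cons /= mnm1E IH.
Qed.

Definition idx2 n (p : 'I_n * 'I_n) := mxvec_index p.1 p.2.
Lemma idx2_inj n : injective (@idx2 n).
Proof. by move=> [a b] [c d] E; rewrite -(unidx_idx a b) -(unidx_idx c d); congr unidx. Qed.

Definition nonisol H := forall v : 'I_(mg_m H), v != mg_a H -> v != mg_b H -> ~~ isolated H v.

Section IsoMon.
Variables (n : nat) (H H0 : mgraph) (hm0 : (mg_m H0 <= n)%N).
Variable f : {ffun 'I_(mg_m H) -> 'I_n}.
Hypotheses (finj : injective f) (fa : f (mg_a H) = widen_ord hm0 (mg_a H0))
  (fb : f (mg_b H) = widen_ord hm0 (mg_b H0)) (nH : nonisol H) (nH0 : nonisol H0).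
Hypothesis hmon : monL (mg_E H) f = monL (mg_E H0) [ffun x => widen_ord hm0 x].

Local Notation io := (widen_ord hm0).
Let f2 (e : 'I_(mg_m H) * 'I_(mg_m H)) := (f e.1, f e.2).
Let i2 (e : 'I_(mg_m H0) * 'I_(mg_m H0)) := (io e.1, io e.2).

Lemma i2_inj : injective i2.
Proof. by move=> [a b] [c d] [/val_inj -> /val_inj ->]. Qed.

Lemma pe_mon : perm_eq (map f2 (mg_E H)) (map i2 (mg_E H0)).
Proof.
apply: (perm_map_inj (@idx2_inj n)); rewrite /perm_eq; apply/allP => x _.
have := congr1 (fun m : 'X_{1..n * n} => m x) hmon; rewrite /= !monL_count => E.
rewrite !count_map; apply/eqP; move: E.
rewrite (@eq_count _ _ (fun e => mxvec_index (f e.1) (f e.2) == x)) //.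
rewrite (@eq_count _ (preim _ _) (fun e => mxvec_index ([ffun x => io x] e.1) ([ffun x => io x] e.2) == x)) //.
by move=> e; rewrite /= !ffunE.
Qed.

Lemma f_range v : (f v < mg_m H0)%N.
Proof.
case: (eqVneq v (mg_a H)) => [->|va]; first by rewrite fa /=.
case: (eqVneq v (mg_b H)) => [->|vb]; first by rewrite fb /=.
have := nH va vb; rewrite /isolated negbK => /hasP [e eE he].
have : f2 e \in map i2 (mg_E H0) by rewrite -(perm_mem pe_mon) map_f.
case/mapP => e0 _ E0; move: (congr1 fst E0) (congr1 snd E0) => /= h1 h2.
case/orP: he => /eqP <-; [rewrite h1; exact: (ltn_ord e0.1) | rewrite h2; exact: (ltn_ord e0.2)].
Qed.

Definition phi (v : 'I_(mg_m H)) : 'I_(mg_m H0) := insubd (mg_a H0) (val (f v)).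
Lemma phiE v : io (phi v) = f v.
Proof. by apply: val_inj; rewrite /= val_insubd f_range. Qed.

Lemma phi_inj : injective phi.
Proof. by move=> x y E; apply: finj; rewrite -!phiE E. Qed.

Lemma phi_surj u : u \in codom phi.
Proof.
apply/codomP.
case: (eqVneq u (mg_a H0)) => [->|ua].
  by exists (mg_a H); apply: (@widen_inj _ _ hm0); rewrite phiE fa.
case: (eqVneq u (mg_b H0)) => [->|ub].
  by exists (mg_b H); apply: (@widen_inj _ _ hm0); rewrite phiE fb.
have := nH0 ua ub; rewrite /isolated negbK => /hasP [e0 eE he].
have : i2 e0 \in map f2 (mg_E H) by rewrite (perm_mem pe_mon) map_f.
case/mapP => e _ [h1 h2]; case/orP: he => /eqP <-.
  by exists e.1; apply: (@widen_inj _ _ hm0); rewrite phiE h1.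
by exists e.2; apply: (@widen_inj _ _ hm0); rewrite phiE h2.
Qed.

Lemma iso_of_mon : mg_iso H H0.
Proof.
exists phi; split.
  apply: inj_card_bij phi_inj _; rewrite -(card_codom phi_inj).
  by apply: subset_leq_card; apply/subsetP => u _; exact: phi_surj.
split.
  apply: (perm_map_inj i2_inj); rewrite -map_comp.
  rewrite (@eq_map _ _ _ f2) ?pe_mon // => e; by rewrite /= /i2 /= !phiE.
by split; apply: (@widen_inj _ _ hm0); rewrite phiE ?fa ?fb.
Qed.

End IsoMon.

Lemma indep (R : realType) n d k (hs : 'I_k -> mgraph) (hrep : is_rep n d hs) (c : 'I_k -> R) :
  (forall X : 'M[R]_n, \sum_i c i *: QH (hs i) X = 0) -> forall i, c i = 0.
Proof.
move=> hc i0; case: hrep => hB [hinj _].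
have [hm0' [_ nH0]] := hB i0.
have hm0 : (mg_m (hs i0) <= n)%N by apply: leq_trans hm0' (geq_minl _ _).
pose io := widen_ord hm0.
pose wa := io (mg_a (hs i0)); pose wb := io (mg_b (hs i0)).
pose q := \sum_l c l *: pQ R (hs l) wa wb.
have q0 : q = 0.
  apply: meval_eq0 => v.
  pose X : 'M[R]_n := vec_mx (\row_t v t).
  have vX : v =1 (fun t => mxvec X 0 t) by move=> t; rewrite vec_mxK mxE.
  rewrite /q (big_morph _ (mevalD _) (meval0 _)).
  transitivity ((\sum_l c l *: QH (hs l) X) wa wb); last by rewrite hc mxE.
  rewrite summxE; apply: eq_bigr => l _; rewrite mevalZ (meval_eq _ vX) -QH_meval [RHS]mxE.
  done.
pose mu0 := monL (mg_E (hs i0)) [ffun x => io x].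
have := congr1 (mcoeff mu0) q0.
rewrite mcoeff0 /q (big_morph _ (mcoeffD _) (mcoeff0 _ _)) (bigD1 i0) //= big1 ?addr0; last first.
  move=> l li0; rewrite mcoeffZ /pQ (big_morph _ (mcoeffD _) (mcoeff0 _ _)) big1 ?mulr0 //.
  move=> f /and3P [finj fa fb]; rewrite mcoeffX; case: eqP => // hmon.
  have [_ [_ nHl]] := hB l.
  have := iso_of_mon (injectiveP _ finj) (eqP fa) (eqP fb) nHl nH0 hmon.
  by move/hinj => E; rewrite E eqxx in li0.
rewrite mcoeffZ /pQ (big_morph _ (mcoeffD _) (mcoeff0 _ _)).
rewrite (eq_bigr (fun f => ((monL (mg_E (hs i0)) f == mu0) : nat)%:R)); last by move=> f _; rewrite mcoeffX.
rewrite -natr_sum => /eqP; rewrite mulf_eq0 => /orP [/eqP //|]; rewrite pnatr_eq0 => /eqP S0.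
pose i0f : {ffun 'I_(mg_m (hs i0)) -> 'I_n} := [ffun x => io x].
have ci : [&& injectiveb i0f, i0f (mg_a (hs i0)) == wa & i0f (mg_b (hs i0)) == wb].
  rewrite !ffunE !eqxx !andbT; apply/injectiveP => x y; rewrite !ffunE; exact: widen_inj.
by move: S0; rewrite (bigD1 i0f ci) /= eqxx.
Qed.

Definition dfltG := MGraph 1 [::] ord0 ord0.

Fixpoint inL (x : mgraph) (s : seq mgraph) : Prop :=
  if s is y :: s' then y = x \/ inL x s' else False.

Lemma inL_nth (x : mgraph) s : inL x s -> exists2 i, (i < size s)%N & nth dfltG s i = x.
Proof.
elim: s => [//|y s IH] /= [<-|/IH [i hi <-]]; first by exists 0%N.
by exists i.+1.
Qed.

Lemma nth_inL s i : (i < size s)%N -> inL (nth dfltG s i) s.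
Proof. elim: s i => [//|y s IH] [|i] /=; [by left | by move/IH; right]. Qed.

Lemma inL_cat x s1 s2 : inL x s1 \/ inL x s2 -> inL x (s1 ++ s2).
Proof. elim: s1 => [|y s IH] /=; [by case | by case=> [[->|h]|h]; [left|right; apply: IH; left|right; apply: IH; right]]. Qed.

Lemma inL_flatten (T : eqType) (r : seq T) (F : T -> seq mgraph) t x :
  t \in r -> inL x (F t) -> inL x (flatten (map F r)).
Proof.
elim: r => [//|y r IH]; rewrite inE => /orP [/eqP <-|tr] h /=; apply: inL_cat; first by left.
by right; apply: IH.
Qed.

Lemma inL_map (T : eqType) (r : seq T) (F : T -> mgraph) t : t \in r -> inL (F t) (map F r).
Proof. elim: r => [//|y r IH]; rewrite inE => /orP [/eqP <-|tr] /=; [by left | right; exact: IH]. Qed.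

Definition graphs_m (d m : nat) : seq mgraph :=
  flatten [seq flatten [seq flatten [seq [seq MGraph m (tval t) a b | b <- enum 'I_m]
     | a <- enum 'I_m] | t <- enum {: s.-tuple ('I_m * 'I_m)}] | s <- iota 0 d.+1].
Definition allG (N d : nat) := flatten [seq graphs_m d m | m <- iota 0 N.+1].

Lemma allG_cover N d H : (mg_m H <= N)%N -> (size (mg_E H) <= d)%N -> inL H (allG N d).
Proof.
case: H => m E a b /= hm hE.
apply: (inL_flatten (t := m)); first by rewrite mem_iota.
apply: (inL_flatten (t := size E)); first by rewrite mem_iota.
apply: (inL_flatten (t := @Tuple (size E) _ E (eqxx _))); first by rewrite mem_enum.
apply: (inL_flatten (t := a)); first by rewrite mem_enum.
by apply: (@inL_map _ _ (fun b => MGraph m E a b)); rewrite mem_enum.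
Qed.

Lemma select_reps (P : mgraph -> Prop) (L : seq mgraph) :
  exists S : seq mgraph, (forall H, inL H S -> P H) /\
    (forall i j, (i < size S)%N -> (j < size S)%N ->
        mg_iso (nth dfltG S i) (nth dfltG S j) -> i = j) /\
    (forall H, inL H L -> P H -> exists2 H', inL H' S & mg_iso H H').
Proof.
elim: L => [|H0 L [S [hP [hinj hcov]]]].
  by exists [::]; split=> //; split=> //.
case: (classic (P H0 /\ ~ exists2 H', inL H' S & mg_iso H0 H')) => [[PH0 nex]|hno].
- exists (H0 :: S); split; first by move=> H /= [<-|/hP].
  split.
    move=> [|i] [|j] //= hi hj hiso.
    + by exfalso; apply: nex; exists (nth dfltG S j) => //; apply: nth_inL.
    + by exfalso; apply: nex; exists (nth dfltG S i); [apply: nth_inL | apply: iso_sym].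
    + by congr (_.+1); apply: hinj.
  move=> H /= [<- _|hL PH]; first by exists H0; [left | apply: iso_refl].
  by have [H' h1 h2] := hcov H hL PH; exists H' => //; right.
- exists S; split=> //; split=> //.
  move=> H /= [<- PH|hL PH]; last exact: hcov.
  apply: NNPP => nex; apply: hno; split=> // ex; apply: nex; exact: ex.
Qed.

Lemma exists_reps n d : exists (k : nat) (hs : 'I_k -> mgraph), is_rep n d hs.
Proof.
have [S [hP [hinj hcov]]] := select_reps (in_B n d) (allG (2 + 2 * d) d).
exists (size S), (fun i => nth dfltG S i); split; [|split].
- by move=> i; apply: hP; apply: nth_inL.
- by move=> i j /(hinj _ _ (ltn_ord i) (ltn_ord j)) /val_inj.
- move=> H hB; case: (hB) => hm [hE _].
  have [H' h1 h2] := hcov H (allG_cover (leq_trans hm (geq_minr _ _)) hE) hB.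
  have [i hi E] := inL_nth h1; exists (Ordinal hi); by rewrite /= E.
Qed.

Unset Implicit Arguments.

Theorem mainTheorem2 (R : realType) (n d : nat) (hn : (0 < n)%N) :
  (exists (k : nat) (hs : 'I_k -> mgraph), is_rep n d hs) /\
  (forall (k : nat) (hs : 'I_k -> mgraph), is_rep n d hs ->
     (forall i, EqPoly n d (@QH R n (hs i))) /\
     (forall c : 'I_k -> R,
        (forall X : 'M[R]_n, \sum_i c i *: QH (hs i) X = 0) -> forall i, c i = 0) /\
     (forall P : 'M[R]_n -> 'M[R]_n, EqPoly n d P ->
        exists c : 'I_k -> R, forall X, P X = \sum_i c i *: QH (hs i) X)) /\
  (forall (H : mgraph) (hm : (mg_m H <= n)%N), in_B n d H ->
     forall X : 'M[R]_n,
       (n - mg_m H)`!%:R *: QH H X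
       = \sum_(g : 'S_n) Sact g (MH hm (Sact (g^-1)%g X))).
Proof.
split; first exact: exists_reps.
split; last by move=> H hm _ X; exact: QH_sym.
move=> k hs hrep; split; [|split].
- by move=> i; apply: QH_EqPoly; case: hrep => hB _; exact: hB.
- exact: indep hrep.
- by move=> P hP; exact: (span_poly hrep hP).
Qed.
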